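(* For any hypergraph $H$, $\pi(S(H))\le\pi(H)$.
   Context: A hypergraph $H=(V,E)$ has finite vertex set $V$ and edge set $E\subseteq 2^V$; $R(H)=\{|F|:F\in E\}$. $H_1\subseteq H_2$ means there is an injective $f\colon V(H_1)\to V(H_2)$ with $f(F)\in E(H_2)$ for all $F\in E(H_1)$. For $G$ on $n$ vertices, $h_n(G)=\sum_{F\in E(G)}1/\binom{n}{|F|}$; $\pi_n(H)=\max\{h_n(G): G\text{ on } n \text{ vertices}, R(G)\subseteq R(H), H\not\subseteq G\}$ and $\pi(H)=\lim_n\pi_n(H)$. The suspension $S(H)$ has vertex set $V(H)\cup\{\ast\}$ for a new vertex $\ast$ and edge set $\{F\cup\{\ast\}: F\in E(H)\}$. *)

(* Defs.v *)
From HB Require Import structures.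
From mathcomp Require Import all_boot all_order all_algebra.
From mathcomp Require Import all_classical all_reals all_analysis.
Set Implicit Arguments. Unset Strict Implicit. Unset Printing Implicit Defensive.
Import Order.TTheory GRing.Theory Num.Theory.
Import numFieldNormedType.Exports.
Local Open Scope ring_scope.

Definition sizes_sub (V W : finType) (EG : {set {set V}}) (EH : {set {set W}}) : bool :=
  [forall F in EG, [exists F' in EH, #|F| == #|F'|]].

Definition hcontained (V1 V2 : finType) (E1 : {set {set V1}}) (E2 : {set {set V2}}) : bool :=
  [exists f : {ffun V1 -> V2}, injectiveb f && [forall F in E1, (f @: F) \in E2]].

Definition lubell (R : realType) (n : nat) (EG : {set {set 'I_n}}) : R :=
  \sum_(F in EG) (('C(n, #|F|))%:R)^-1.

(* pi_n(H): maximum of h_n(G) over all G on n vertices with R(G) \subseteq R(H)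
   and H not contained in G (0 if there is no such G; h_n >= 0). *)
Definition pi_n (R : realType) (V : finType) (E : {set {set V}}) (n : nat) : R :=
  \big[Num.max/0]_(EG : {set {set 'I_n}} | sizes_sub EG E && ~~ hcontained E EG)
     lubell R EG.

Definition turan_density (R : realType) (V : finType) (E : {set {set V}}) : R :=
  limn (pi_n R E : R^nat).

(* Suspension S(H): vertex set option V (None is the new vertex "star"),
   edges F \cup {*} for F in E(H). *)
Definition susp (V : finType) (E : {set {set V}}) : {set {set option V}} :=
  [set (Some @: F) :|: [set None] | F : {set V} in E].

(* Main.v *)
Require Import Defs.
From mathcomp Require Import all_boot all_order all_algebra.
From mathcomp Require Import all_classical all_reals all_analysis.
Import Order.TTheory GRing.Theory Num.Theory.
Import numFieldNormedType.Exports.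
Local Open Scope ring_scope.
Set Implicit Arguments. Unset Strict Implicit.

Section Comb.
Variable R : realType.

Lemma reindex_phi n (phi : {set 'I_n} -> {set 'I_n.+1}) (P : pred {set 'I_n.+1})
  (G : {set {set 'I_n.+1}}) (g : {set 'I_n.+1} -> R) :
  injective phi -> (forall F', P F' -> exists F, F' = phi F) -> (forall F, P (phi F)) ->
  \sum_(F in [set F | phi F \in G]) g (phi F) = \sum_(F' in G | P F') g F'.
Proof.
move=> inj hP hphi.
transitivity (\sum_(F' in phi @: [set F | phi F \in G]) g F').
  by rewrite big_imset //; move=> x y _ _ /inj.
apply: eq_bigl => F' /=; apply/idP/idP.
  case/imsetP => F; rewrite inE => FG ->; by rewrite FG hphi.
case/andP => FG /hP [F EF]; apply/imsetP; exists F => //; by rewrite inE -EF.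
Qed.

Lemma exch_count n (P : 'I_n.+1 -> pred {set 'I_n.+1}) (G : {set {set 'I_n.+1}})
  (g : {set 'I_n.+1} -> R) :
  \sum_v \sum_(F' in G | P v F') g F' = \sum_(F' in G) g F' *+ #|[set v | P v F']|.
Proof.
under eq_bigr do rewrite big_mkcondr /=.
rewrite exchange_big /=; apply: eq_bigr => F' _.
rewrite -big_mkcond /= -sumr_const; apply: eq_bigl => v; by rewrite inE.
Qed.


Definition glink n (v : 'I_n.+1) (G : {set {set 'I_n.+1}}) : {set {set 'I_n}} :=
  [set F : {set 'I_n} | (v |: (lift v @: F)) \in G].
Definition gdel n (v : 'I_n.+1) (G : {set {set 'I_n.+1}}) : {set {set 'I_n}} :=
  [set F : {set 'I_n} | (lift v @: F) \in G].

Lemma lift_image n (v : 'I_n.+1) (F' : {set 'I_n.+1}) :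
  v \notin F' -> F' = lift v @: [set i | lift v i \in F'].
Proof.
move=> vF; apply/setP => u; case: (unliftP v u) => [j ->|->].
  by rewrite mem_imset ?inE //; apply: lift_inj.
rewrite (negbTE vF); apply/esym/negbTE/imsetP => [[j _ Ej]].
by move: (neq_lift v j); rewrite -Ej eqxx.
Qed.

Lemma notin_lift n (v : 'I_n.+1) (F : {set 'I_n}) : v \notin lift v @: F.
Proof. apply/imsetP => [[j _ Ej]]; by move: (neq_lift v j); rewrite -Ej eqxx. Qed.

Lemma card_link n (v : 'I_n.+1) (F : {set 'I_n}) : #|v |: (lift v @: F)| = #|F|.+1.
Proof. by rewrite cardsU1 notin_lift card_imset //; apply: lift_inj. Qed.

Lemma card_del n (v : 'I_n.+1) (F : {set 'I_n}) : #|lift v @: F| = #|F|.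
Proof. by rewrite card_imset //; apply: lift_inj. Qed.

Lemma binR_nz n k : (k <= n)%N -> ('C(n, k)%:R : R) != 0.
Proof. by move=> h; rewrite pnatr_eq0 -lt0n bin_gt0. Qed.

Lemma lubell_link n (G : {set {set 'I_n.+1}}) :
  (forall F', F' \in G -> 0 < #|F'|)%N ->
  \sum_v lubell R (glink v G) = n.+1%:R * lubell R G.
Proof.
move=> Gpos; rewrite /lubell.
have step v : \sum_(F in glink v G) ('C(n, #|F|)%:R : R)^-1 =
    \sum_(F' in G | v \in F') ('C(n, #|F'|.-1)%:R)^-1.
  rewrite -(@reindex_phi n (fun F => v |: (lift v @: F)) (fun F' => v \in F')).
  - by apply: eq_bigr => F _; rewrite card_link.
  - move=> F1 F2 E12; apply: (imset_inj (@lift_inj _ v)).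
    by rewrite -(finset.setU1K (notin_lift v F1)) -(finset.setU1K (notin_lift v F2)) E12.
  - move=> F' vF'; exists [set i | lift v i \in F' :\ v].
    rewrite -(@lift_image n v (F' :\ v)); first by rewrite finset.setD1K.
    by rewrite !inE eqxx.
  - by move=> F; rewrite setU11.
under eq_bigr do rewrite step.
rewrite exch_count mulr_sumr; apply: eq_bigr => F' FG.
have -> : #|[set v | v \in F']| = #|F'| by apply: eq_card => u; rewrite inE.
have := Gpos F' FG; have := max_card F'; rewrite card_ord.
case: #|F'| => // k kn _ /=.
rewrite -[_ *+ k.+1]mulr_natr mulrC.
apply/eqP; rewrite eqr_div ?binR_nz //; apply/eqP.
by rewrite -!natrM mulnC mul_bin_diag mulnC.
Qed.

Lemma lubell_del n (G : {set {set 'I_n.+1}}) :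
  (forall F', F' \in G -> #|F'| <= n)%N ->
  \sum_v lubell R (gdel v G) = n.+1%:R * lubell R G.
Proof.
move=> Gle; rewrite /lubell.
have step v : \sum_(F in gdel v G) ('C(n, #|F|)%:R : R)^-1 =
    \sum_(F' in G | v \notin F') ('C(n, #|F'|)%:R)^-1.
  rewrite -(@reindex_phi n (fun F => lift v @: F) (fun F' => v \notin F')).
  - by apply: eq_bigr => F _; rewrite card_del.
  - exact: (imset_inj (@lift_inj _ v)).
  - by move=> F' vF'; exists [set i | lift v i \in F']; rewrite -lift_image.
  - by move=> F; rewrite notin_lift.
under eq_bigr do rewrite step.
rewrite exch_count mulr_sumr; apply: eq_bigr => F' FG.
have -> : #|[set v | v \notin F']| = (n.+1 - #|F'|)%N.
  have h := cardsC F'; rewrite card_ord in h.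
  transitivity #|~: F'|; first by apply: eq_card => u; rewrite !inE.
  apply/eqP; rewrite -(eqn_add2l #|F'|) h subnKC //.
  by have := max_card F'; rewrite card_ord.
have := Gle F' FG; move: #|F'| => k kn.
rewrite -[_ *+ (n.+1 - k)]mulr_natr mulrC.
apply/eqP; rewrite eqr_div ?binR_nz //; last by apply: ltnW.
apply/eqP; by rewrite -!natrM -mul_bin_down.
Qed.

End Comb.

Lemma card_susp_edge (V : finType) (F0 : {set V}) :
  #|(Some @: F0) :|: [set None]| = #|F0|.+1.
Proof.
rewrite finset.setUC cardsU1 card_imset; last exact: Some_inj.
by have -> : None \notin Some @: F0 by apply/imsetP => [[x _]].
Qed.

Lemma sizes_link n (v : 'I_n.+1) (V : finType) (E : {set {set V}}) G :
  sizes_sub G (susp E) -> sizes_sub (glink v G) E.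
Proof.
move/forallP => h; apply/forallP => F; apply/implyP; rewrite inE => FG.
have /existsP [S /andP [SE /eqP cS]] := implyP (h _) FG.
case/imsetP: SE cS => F0 F0E ->; rewrite card_link card_susp_edge => -[cS].
by apply/existsP; exists F0; rewrite F0E cS eqxx.
Qed.

Lemma sizes_pos n (V : finType) (E : {set {set V}}) (G : {set {set 'I_n}}) F' :
  sizes_sub G (susp E) -> F' \in G -> (0 < #|F'|)%N.
Proof.
move/forallP => h FG; have /existsP [S /andP [SE /eqP cS]] := implyP (h _) FG.
by case/imsetP: SE cS => F0 F0E ->; rewrite card_susp_edge => ->.
Qed.

Lemma sizes_le n (V : finType) (E : {set {set V}}) (G : {set {set 'I_n}}) F' :
  sizes_sub G E -> F' \in G -> (#|F'| <= #|V|)%N.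
Proof.
move/forallP => h FG; have /existsP [S /andP [SE /eqP cS]] := implyP (h _) FG.
by rewrite cS max_card.
Qed.

Lemma sizes_del n (v : 'I_n.+1) (V : finType) (E : {set {set V}}) G :
  sizes_sub G E -> sizes_sub (gdel v G) E.
Proof.
move/forallP => h; apply/forallP => F; apply/implyP; rewrite inE => FG.
have /existsP [S /andP [SE /eqP cS]] := implyP (h _) FG.
by apply/existsP; exists S; rewrite SE -cS card_del eqxx.
Qed.

Lemma hcont_link n (v : 'I_n.+1) (V : finType) (E : {set {set V}}) G :
  hcontained E (glink v G) -> hcontained (susp E) G.
Proof.
case/existsP => f /andP [/injectiveP finj /forallP fE].
apply/existsP; exists [ffun o => if o is Some x then lift v (f x) else v].
apply/andP; split.
  apply/injectiveP => -[x|] [y|]; rewrite !ffunE //.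
  - by move/lift_inj/finj => ->.
  - by move=> Ex; move: (neq_lift v (f x)); rewrite Ex eqxx.
  - by move=> Ey; move: (neq_lift v (f y)); rewrite -Ey eqxx.
apply/forallP => S; apply/implyP => /imsetP [F0 F0E ->].
have := implyP (fE F0) F0E; rewrite inE.
rewrite imsetU imset_set1 ffunE finset.setUC; congr (_ \in G); congr (_ :|: _).
rewrite -!imset_comp; apply: eq_imset => x; by rewrite /= ffunE.
Qed.

Lemma hcont_del n (v : 'I_n.+1) (V : finType) (E : {set {set V}}) G :
  hcontained E (gdel v G) -> hcontained E G.
Proof.
case/existsP => f /andP [/injectiveP finj /forallP fE].
apply/existsP; exists [ffun x => lift v (f x)].
apply/andP; split.
  by apply/injectiveP => x y; rewrite !ffunE => /lift_inj/finj.
apply/forallP => F; apply/implyP => FE.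
have := implyP (fE F) FE; rewrite inE; congr (_ \in G).
rewrite -imset_comp; apply: eq_imset => x; by rewrite /= ffunE.
Qed.

Section Pi.
Variables (R : realType) (V : finType) (E : {set {set V}}).

Lemma pi_n_ge0 n : 0 <= pi_n R E n.
Proof.
rewrite /pi_n; apply: (big_ind (fun x => 0 <= x)) => //.
  by move=> x y hx hy; rewrite le_max hx.
move=> G _; apply: sumr_ge0 => F _; by rewrite invr_ge0 ler0n.
Qed.

Lemma pi_n_ub n (c : R) : 0 <= c ->
  (forall G : {set {set 'I_n}}, sizes_sub G E -> ~~ hcontained E G -> lubell R G <= c) ->
  pi_n R E n <= c.
Proof.
move=> c0 h; rewrite /pi_n; apply: (big_ind (fun x => x <= c)) => //.
  by move=> x y hx hy; rewrite ge_max hx hy.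
by move=> G /andP [] hs hc; apply: h.
Qed.

Lemma lubell_le_pi n (G : {set {set 'I_n}}) :
  sizes_sub G E -> ~~ hcontained E G -> lubell R G <= pi_n R E n.
Proof.
move=> hs hc; rewrite /pi_n (bigD1 G) /=; last by rewrite hs hc.
by rewrite le_max lexx.
Qed.

Lemma avg_bound n (G : {set {set 'I_n.+1}}) (f : 'I_n.+1 -> R) (c : R) :
  \sum_v f v = n.+1%:R * lubell R G -> (forall v, f v <= c) -> lubell R G <= c.
Proof.
move=> hs hf.
have : n.+1%:R * lubell R G <= n.+1%:R * c.
  rewrite -hs; apply: le_trans (ler_sum _ (fun v _ => hf v)) _.
  by rewrite sumr_const card_ord mulr_natl.
by rewrite ler_pM2l // ltr0n.
Qed.

End Pi.

Section Pi2.
Variables (R : realType) (V : finType) (E : {set {set V}}).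

Lemma pi_susp n : pi_n R (susp E) n.+1 <= pi_n R E n.
Proof.
apply: pi_n_ub; first exact: pi_n_ge0.
move=> G hs hc; apply: (avg_bound (f := fun v => lubell R (glink v G))).
  by apply: lubell_link => F' FG; apply: sizes_pos hs FG.
move=> v; apply: lubell_le_pi; first exact: sizes_link.
by apply: contra hc; apply: hcont_link.
Qed.

Lemma pi_mono n : (#|V| <= n)%N -> pi_n R E n.+1 <= pi_n R E n.
Proof.
move=> Vn; apply: pi_n_ub; first exact: pi_n_ge0.
move=> G hs hc; apply: (avg_bound (f := fun v => lubell R (gdel v G))).
  by apply: lubell_del => F' FG; apply: leq_trans (sizes_le hs FG) Vn.
move=> v; apply: lubell_le_pi; first exact: sizes_del.
by apply: contra hc; apply: hcont_del.
Qed.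

End Pi2.

Lemma cvg_pi (R : realType) (V : finType) (E : {set {set V}}) : cvgn (pi_n R E : R^nat).
Proof.
set N := #|V|.
have hc : cvgn ([sequence pi_n R E (k + N)%N]_k : R^nat).
  apply/cvg_ex; eexists; apply: nonincreasing_cvgn.
    apply/nonincreasing_seqP => k /=; rewrite addSn; apply: pi_mono.
    by rewrite leq_addl.
  by exists 0 => _ [k _ <-]; apply: pi_n_ge0.
move/cvg_ex: hc => [l hl]; apply/cvg_ex; exists l.
by rewrite -(cvg_shiftn N).
Qed.

Theorem mainTheorem17 (R : realType) (V : finType) (E : {set {set V}}) :
  turan_density R (susp E) <= turan_density R E.
Proof.
rewrite /turan_density.
have c1 := @cvg_pi R _ (susp E); have c2 := @cvg_pi R _ E.
apply: (ler_cvg_to (a := (\oo)%classic) (f := [sequence pi_n R (susp E) k.+1]_k) (g := (pi_n R E : R^nat))).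
- by rewrite cvg_shiftS; apply: c1.
- exact: c2.
- by near=> k; apply: pi_susp.
Unshelve. all: end_near.
Qed.
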